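(* Let $T>0$, let $(\pi_n)$ be a sequence of regular partitions of $[0,T]$ ($t^n_k=kT/N_n$, $(N_n)$ strictly increasing), and let $X=\{X(t)\colon t\in[0,T]\}$ be a second order process satisfying (C1) for some $\gamma\in(0,1)$. Assume there exist $\varphi\in\Psi$ and a continuous bounded function $g_0\colon(0,T)\to\mathbb R$ such that $$\lim_{h\to0+}\sup_{\varphi(h)\le t\le T-h}\Big|\frac{\mathbb{E}(X_{t+h}-2X_t+X_{t-h})^2}{h^{2\gamma}}-g_0(t)\Big|=0.$$ Then $\mathbb{E}V^{(2)}_{N_n}(X,2)\to\int_0^Tg_0(t)\,dt$ as $n\to\infty$, where $V^{(2)}_{N_n}(X,2)=(T^{-1}N_n)^{2\gamma-1}\sum_{k=1}^{N_n-1}\big(X(t^n_{k+1})-2X(t^n_k)+X(t^n_{k-1})\big)^2$.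
   Context: $\sigma_X^2(s,t)=\mathbb{E}[X(t)-X(s)]^2$. (C1): $\sigma_X(0,\delta)=O(\delta^\gamma)$ as $\delta\downarrow0$. $\Psi$ is the class of continuous $\varphi\colon(0,T]\to[0,\infty)$ with $\varphi(h)\to0$, $L(h):=\varphi(h)/h\to\infty$, $hL(h)^3\to0$ as $h\downarrow0$. *)

(* Defs.v *)
From Stdlib Require Import Reals Lra List.
Open Scope R_scope.

(* A second order process X on [0,T] is represented by its covariance
   kernel K s t = E[X(s) X(t)], which is symmetric and positive semidefinite
   on [0,T].  All second moments of finite linear combinations of X are
   determined by K. *)
Definition cov_kernel (T : R) (K : R -> R -> R) : Prop :=
  (forall s t, K s t = K t s) /\
  (forall (n : nat) (a t : nat -> R),
     (forall i, (i <= n)%nat -> 0 <= t i <= T) ->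
     0 <= sum_f_R0 (fun i => sum_f_R0 (fun j => a i * a j * K (t i) (t j)) n) n).

(* sigma_X^2(s,t) = E[X(t) - X(s)]^2 *)
Definition sigma2 (K : R -> R -> R) (s t : R) : R :=
  K t t - 2 * K s t + K s s.

(* E (X(a) - 2 X(b) + X(c))^2 *)
Definition D2 (K : R -> R -> R) (a b c : R) : R :=
  K a a + 4 * K b b + K c c - 4 * K a b - 4 * K b c + 2 * K a c.

Definition cond_C1 (T : R) (K : R -> R -> R) (gamma : R) : Prop :=
  exists C delta0, 0 < C /\ 0 < delta0 /\
    forall delta, 0 < delta < delta0 -> delta <= T ->
      sqrt (sigma2 K 0 delta) <= C * Rpower delta gamma.

Definition in_Psi (T : R) (phi : R -> R) : Prop :=
  (forall h, 0 < h <= T -> limit1_in phi (fun x => 0 < x <= T) (phi h) h) /\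
  (forall h, 0 < h <= T -> 0 <= phi h) /\
  limit1_in phi (fun x => 0 < x <= T) 0 0 /\
  (forall M, exists delta, 0 < delta /\
     forall h, 0 < h < delta -> h <= T -> phi h / h > M) /\
  limit1_in (fun h => h * (phi h / h) ^ 3) (fun x => 0 < x <= T) 0 0.

Definition tpt (T : R) (N k : nat) : R := INR k * T / INR N.

Definition EV2 (T : R) (K : R -> R -> R) (gamma : R) (N : nat) : R :=
  Rpower (INR N / T) (2 * gamma - 1) *
  fold_right Rplus 0
    (map (fun k => D2 K (tpt T N (S k)) (tpt T N k) (tpt T N (pred k)))
         (seq 1 (N - 1))).

(* Main.v *)
Require Import Defs.
From Stdlib Require Import Reals Lra List.
Open Scope R_scope.
From Stdlib Require Import Lia.
From Coquelicot Require Import Coquelicot.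
Open Scope R_scope.


Lemma psd3 T K (HK : cov_kernel T K) x y z a b c :
  0 <= x <= T -> 0 <= y <= T -> 0 <= z <= T ->
  0 <= a*a*K x x + a*b*K x y + a*c*K x z + b*a*K y x + b*b*K y y + b*c*K y z
      + c*a*K z x + c*b*K z y + c*c*K z z.
Proof.
  intros Hx Hy Hz. destruct HK as [_ HK].
  pose (av := fun i : nat => match i with 0%nat => a | 1%nat => b | _ => c end).
  pose (tv := fun i : nat => match i with 0%nat => x | 1%nat => y | _ => z end).
  specialize (HK 2%nat av tv).
  assert (H : forall i, (i <= 2)%nat -> 0 <= tv i <= T).
  { intros [|[|i]] _; simpl; auto. }
  specialize (HK H). simpl in HK. lra.
Qed.

Lemma D2_nonneg T K (HK : cov_kernel T K) a b c :
  0 <= a <= T -> 0 <= b <= T -> 0 <= c <= T -> 0 <= D2 K a b c.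
Proof.
  intros. pose proof (psd3 T K HK a b c 1 (-2) 1 H H0 H1).
  destruct HK as [Hs _]. unfold D2.
  rewrite (Hs b a), (Hs c a), (Hs c b) in H2. lra.
Qed.

Lemma D2_le T K (HK : cov_kernel T K) a b c :
  0 <= a <= T -> 0 <= b <= T -> 0 <= c <= T ->
  D2 K a b c <= 2 * sigma2 K b a + 2 * sigma2 K c b.
Proof.
  intros. pose proof (psd3 T K HK a b c 1 0 (-1) H H0 H1).
  destruct HK as [Hs _]. unfold D2, sigma2.
  rewrite (Hs b a), (Hs c a), (Hs c b) in H2. rewrite (Hs b a), (Hs c b). lra.
Qed.

Lemma sig_le T K (HK : cov_kernel T K) s t :
  0 <= T -> 0 <= s <= T -> 0 <= t <= T ->
  sigma2 K s t <= 2 * sigma2 K 0 s + 2 * sigma2 K 0 t.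
Proof.
  intros. assert (H2 : 0 <= 0 <= T) by lra.
  pose proof (psd3 T K HK 0 s t (-2) 1 1 H2 H0 H1).
  destruct HK as [Hs _]. unfold sigma2.
  rewrite (Hs s 0), (Hs t 0), (Hs t s) in H3. lra.
Qed.

Lemma sig_nonneg T K (HK : cov_kernel T K) s t :
  0 <= s <= T -> 0 <= t <= T -> 0 <= sigma2 K s t.
Proof.
  intros. pose proof (psd3 T K HK s t t 1 (-1) 0 H H0 H0).
  destruct HK as [Hs _]. unfold sigma2.
  rewrite (Hs t s) in H1. lra.
Qed.

Definition SS (f : nat -> R) (n : nat) : R := fold_right Rplus 0 (map f (seq 1 n)).

Lemma S_0 f : SS f 0 = 0.
Proof. reflexivity. Qed.

Lemma S_S f n : SS f (Datatypes.S n) = SS f n + f (Datatypes.S n).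
Proof.
  unfold SS. rewrite seq_S, map_app, fold_right_app. simpl.
  generalize (map f (seq 1 n)). intro l. induction l; simpl; lra.
Qed.

Lemma S_le f g n : (forall k, (1 <= k <= n)%nat -> f k <= g k) -> SS f n <= SS g n.
Proof.
  induction n; intros H. rewrite !S_0; lra.
  rewrite !S_S. assert (f (Datatypes.S n) <= g (Datatypes.S n)) by (apply H; lia).
  assert (SS f n <= SS g n) by (apply IHn; intros; apply H; lia). lra.
Qed.

Lemma S_ext f g n : (forall k, (1 <= k <= n)%nat -> f k = g k) -> SS f n = SS g n.
Proof.
  intros H. apply Rle_antisym; apply S_le; intros k Hk; rewrite (H k Hk); lra.
Qed.

Lemma S_plus f g n : SS (fun k => f k + g k) n = SS f n + SS g n.
Proof. induction n. rewrite !S_0; lra. rewrite !S_S, IHn. lra. Qed.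

Lemma S_scal c f n : SS (fun k => c * f k) n = c * SS f n.
Proof. induction n. rewrite !S_0; lra. rewrite !S_S, IHn. lra. Qed.

Lemma S_const c n : SS (fun _ => c) n = INR n * c.
Proof. induction n. rewrite S_0; simpl; lra. rewrite S_S, IHn, S_INR. lra. Qed.

Lemma S_abs f n : Rabs (SS f n) <= SS (fun k => Rabs (f k)) n.
Proof.
  induction n. rewrite !S_0, Rabs_R0; lra.
  rewrite !S_S. eapply Rle_trans. apply Rabs_triang. lra.
Qed.

Lemma sum_f_R0_S F n : sum_f_R0 F n = F 0%nat + SS F n.
Proof. induction n. simpl. rewrite S_0. lra. rewrite S_S. simpl. rewrite IHn. lra. Qed.

Lemma count_le (h c : R) n : 0 < h -> 0 <= c ->
  SS (fun k => if Rlt_dec (INR k * h) c then h else 0) n <= Rmin (INR n * h) c.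
Proof.
  intros Hh Hc. induction n.
  rewrite S_0. simpl. apply Rmin_glb; lra.
  rewrite S_S. destruct (Rlt_dec (INR (Datatypes.S n) * h) c) as [L|L].
  - rewrite Rmin_left by lra. pose proof (Rmin_l (INR n * h) c).
    rewrite S_INR in *. lra.
  - apply Rmin_glb. pose proof (Rmin_l (INR n * h) c). rewrite S_INR. lra.
    pose proof (Rmin_r (INR n * h) c). lra.
Qed.

Lemma Rpower_sq x g : 0 < x -> Rpower x g * Rpower x g = Rpower x (2 * g).
Proof. intros. unfold Rpower. rewrite <- exp_plus. f_equal. ring. Qed.

Lemma sig0_bound T K gamma (HK : cov_kernel T K) C delta0 u :
  0 < gamma ->
  (forall delta, 0 < delta < delta0 -> delta <= T ->
      sqrt (sigma2 K 0 delta) <= C * Rpower delta gamma) ->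
  0 < u < delta0 -> u <= T ->
  forall x, 0 <= x <= u -> sigma2 K 0 x <= C * C * Rpower u (2 * gamma).
Proof.
  intros Hg HC Hu HuT x Hx.
  assert (Hp : 0 < Rpower u (2 * gamma)) by (unfold Rpower; apply exp_pos).
  destruct (Req_dec x 0) as [->|Hx0].
  { unfold sigma2. replace (K 0 0 - 2 * K 0 0 + K 0 0) with 0 by ring.
    pose proof (Rle_0_sqr C). unfold Rsqr in H. nra. }
  assert (Hxp : 0 < x) by lra.
  specialize (HC x ltac:(lra) ltac:(lra)).
  assert (Hs : 0 <= sigma2 K 0 x) by (apply (sig_nonneg T K HK); lra).
  rewrite <- (sqrt_sqrt _ Hs).
  pose proof (sqrt_pos (sigma2 K 0 x)).
  apply Rle_trans with ((C * Rpower x gamma) * (C * Rpower x gamma)).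
  apply Rmult_le_compat; lra.
  replace ((C * Rpower x gamma) * (C * Rpower x gamma)) with
    (C * C * (Rpower x gamma * Rpower x gamma)) by ring.
  rewrite Rpower_sq by lra.
  apply Rmult_le_compat_l. pose proof (Rle_0_sqr C). unfold Rsqr in H0. lra.
  apply Rle_Rpower_l; lra.
Qed.

Lemma D2_small T K (HK : cov_kernel T K) a b c u M :
  0 <= a <= u -> 0 <= b <= u -> 0 <= c <= u -> u <= T ->
  (forall x, 0 <= x <= u -> sigma2 K 0 x <= M) ->
  D2 K a b c <= 16 * M.
Proof.
  intros Ha Hb Hc Hu HM.
  pose proof (D2_le T K HK a b c ltac:(lra) ltac:(lra) ltac:(lra)).
  pose proof (sig_le T K HK b a ltac:(lra) ltac:(lra) ltac:(lra)).
  pose proof (sig_le T K HK c b ltac:(lra) ltac:(lra) ltac:(lra)).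
  pose proof (HM a Ha). pose proof (HM b Hb). pose proof (HM c Hc). lra.
Qed.

Lemma cont_interior (g0 : R -> R) T t :
  0 < t < T -> limit1_in g0 (fun x => 0 < x < T) (g0 t) t -> continuity_pt g0 t.
Proof.
  intros Ht H. unfold continuity_pt, continue_in, limit1_in, limit_in in *.
  intros eps Heps. destruct (H eps Heps) as [alp [Halp H']].
  exists (Rmin alp (Rmin t (T - t))). split.
  { apply Rmin_pos. lra. apply Rmin_pos; lra. }
  intros x [_ Hx]. apply H'. simpl in *. unfold R_dist in *.
  pose proof (Rmin_l alp (Rmin t (T - t))).
  pose proof (Rmin_r alp (Rmin t (T - t))).
  pose proof (Rmin_l t (T - t)). pose proof (Rmin_r t (T - t)).
  split; [|lra]. apply Rabs_def2 in Hx. lra.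
Qed.

Definition clamp (e T x : R) := Rmin (Rmax x e) (T - e).

Lemma clamp_lip e T x y : e <= T - e -> Rabs (clamp e T x - clamp e T y) <= Rabs (x - y).
Proof.
  intros. unfold clamp, Rmin, Rmax.
  repeat (destruct Rle_dec); unfold Rabs; repeat destruct Rcase_abs; lra.
Qed.

Lemma clamp_range e T x : e <= T - e -> e <= clamp e T x <= T - e.
Proof. intros. unfold clamp, Rmin, Rmax. repeat (destruct Rle_dec); lra. Qed.

Lemma clamp_id e T x : e <= x <= T - e -> clamp e T x = x.
Proof. intros. unfold clamp, Rmin, Rmax. repeat (destruct Rle_dec); lra. Qed.

Lemma clamp_cont e T x : e <= T - e -> continuity_pt (clamp e T) x.
Proof.
  intros He. unfold continuity_pt, continue_in, limit1_in, limit_in.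
  intros eps Heps. exists eps. split. lra. intros y [_ Hy]. simpl in *.
  unfold R_dist in *. eapply Rle_lt_trans. apply clamp_lip; auto. auto.
Qed.

Lemma approx_int f a b : a <= b ->
  (forall eps : posreal, {g : R -> R & {pr : Riemann_integrable g a b &
     {psi : StepFun a b | (forall t, a <= t <= b -> Rabs (f t - g t) <= psi t)
                             /\ Rabs (RiemannInt_SF psi) < eps}}}) ->
  Riemann_integrable f a b.
Proof.
  intros Hab X eps.
  assert (He2 : 0 < eps / 2) by (destruct eps; simpl; lra).
  destruct (X (mkposreal _ He2)) as [g [pr [psi [H1 H2]]]].
  destruct (pr (mkposreal _ He2)) as [phi1 [psi1 [H3 H4]]].
  exists phi1. exists (mkStepFun (StepFun_P28 1 psi1 psi)). split.
  - intros t Ht. rewrite Rmin_left, Rmax_right in Ht by lra. simpl.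
    specialize (H1 t Ht). specialize (H3 t). rewrite Rmin_left, Rmax_right in H3 by lra.
    specialize (H3 Ht).
    replace (f t - phi1 t) with ((f t - g t) + (g t - phi1 t)) by ring.
    eapply Rle_trans. apply Rabs_triang. lra.
  - rewrite StepFun_P30. simpl in *. eapply Rle_lt_trans. apply Rabs_triang.
    rewrite Rmult_1_l. lra.
Qed.

Section Psi.
Variables (T B e : R).
Definition psif (x : R) := if Rle_dec x e then 2 * B else if Rle_dec (T - e) x then 2 * B else 0.

Lemma psi_step : 0 < e -> e < T - e -> IsStepFun psif 0 T.
Proof.
  intros He HeT. exists (0 :: e :: (T - e) :: T :: nil)%list.
  exists (2 * B :: 0 :: 2 * B :: nil)%list.
  unfold adapted_couple. simpl. repeat split.
  - intros [|[|[|i]]]; simpl; intros; try lra; lia.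
  - rewrite Rmin_left; lra.
  - rewrite Rmax_right; lra.
  - intros [|[|[|i]]]; simpl; intros Hi x Hx; unfold open_interval in Hx; unfold psif;
      repeat destruct Rle_dec; try lra; lia.
Defined.
End Psi.

Lemma g0_int T g0 B : 0 < T -> 0 <= B -> (forall t, 0 <= t <= T -> Rabs (g0 t) <= B) ->
  (forall t, 0 < t < T -> continuity_pt g0 t) -> Riemann_integrable g0 0 T.
Proof.
  intros HT HB Hb Hc. apply approx_int. lra. intros eps.
  set (e := Rmin (T/4) (eps/(8*(B+1)))).
  assert (He : 0 < e).
  { unfold e. apply Rmin_pos. lra. destruct eps; simpl. apply Rdiv_lt_0_compat; lra. }
  assert (He1 : e <= T/4) by apply Rmin_l.
  assert (He2 : e <= eps/(8*(B+1))) by apply Rmin_r.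
  assert (HeT : e < T - e) by lra.
  exists (fun x => g0 (clamp e T x)).
  unshelve eexists.
  { apply continuity_implies_RiemannInt. lra. intros x _.
    apply (continuity_pt_comp (clamp e T) g0). apply clamp_cont; lra.
    apply Hc. pose proof (clamp_range e T x). lra. }
  exists (mkStepFun (psi_step T B e He HeT)). split.
  - intros t Ht. simpl. unfold psif.
    pose proof (clamp_range e T t ltac:(lra)).
    destruct Rle_dec.
    + eapply Rle_trans. apply Rabs_triang. rewrite Rabs_Ropp.
      pose proof (Hb t Ht). pose proof (Hb (clamp e T t) ltac:(lra)). lra.
    + destruct Rle_dec.
      * eapply Rle_trans. apply Rabs_triang. rewrite Rabs_Ropp.
        pose proof (Hb t Ht). pose proof (Hb (clamp e T t) ltac:(lra)). lra.
      * rewrite clamp_id by lra. rewrite Rminus_diag, Rabs_R0. lra.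
  - unfold RiemannInt_SF. destruct Rle_dec; [|lra]. simpl.
    rewrite Rabs_right.
    2: { nra. }
    assert (4 * B * e <= 4 * B * (eps / (8 * (B + 1)))) by (apply Rmult_le_compat_l; lra).
    assert (4 * B * (eps / (8 * (B + 1))) < eps).
    { destruct eps as [ep Hep]; simpl in *.
      apply Rlt_le_trans with (ep / 2). 2: lra.
      unfold Rdiv. rewrite Rinv_mult. 
      assert (0 < / (B+1)) by (apply Rinv_0_lt_compat; lra).
      assert (B * / (B + 1) < 1). { apply (Rmult_lt_reg_r (B+1)). lra.
        rewrite Rmult_assoc, Rinv_l by lra. lra. }
      replace (4 * B * (ep * (/ 8 * / (B + 1)))) with (ep / 2 * (B * / (B+1))) by (field; lra).
      nra. }
    lra.
Qed.

Lemma mkseq_cons (g : nat -> R) m :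
  seq.mkseq g (Datatypes.S m) = g 0%nat :: seq.mkseq (fun i => g (Datatypes.S i)) m.
Proof.
  unfold seq.mkseq. simpl. f_equal.
  assert (forall a, seq.map g (seq.iota (Datatypes.S a) m) =
                    seq.map (fun i => g (Datatypes.S i)) (seq.iota a m)).
  { induction m; intros a; simpl; auto. f_equal. apply IHm. }
  apply H.
Qed.

Lemma RS_mkseq (f : R -> R) n : forall g : nat -> R,
  Riemann_sum f (SF_seq_f2 (fun x _ => x) (seq.mkseq g (Datatypes.S (Datatypes.S n))))
  = sum_f_R0 (fun i => (g (Datatypes.S i) - g i) * f (g i)) n.
Proof.
  induction n; intros g.
  - rewrite !mkseq_cons. simpl. unfold Riemann_sum. simpl.
    change (scal ?x ?y) with (x * y). change (plus ?x ?y) with (x + y).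
    change (@zero R_ModuleSpace) with 0. ring.
  - rewrite mkseq_cons. rewrite SF_cons_f2.
    2: { rewrite seq.size_mkseq. lia. }
    rewrite Riemann_sum_cons. rewrite IHn. simpl.
    change (scal ?x ?y) with (x * y). change (plus ?x ?y) with (x + y).
    change (sum_f_R0 (fun i : nat => (g (Datatypes.S i) - g i) * f (g i)) n +
  (g (Datatypes.S (Datatypes.S n)) - g (Datatypes.S n)) * f (g (Datatypes.S n)))
    with (sum_f_R0 (fun i : nat => (g (Datatypes.S i) - g i) * f (g i)) (Datatypes.S n)).
    rewrite (decomp_sum _ (Datatypes.S n)) by lia. reflexivity.
Qed.

Lemma riemann_conv g0 T (pr : Riemann_integrable g0 0 T) : 0 < T ->
  forall eps, 0 < eps -> exists N0, forall N, (N0 <= N)%nat -> (1 <= N)%nat ->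
  Rabs (T / INR N * g0 0 + SS (fun k => T / INR N * g0 (INR k * T / INR N)) (N - 1)
        - RiemannInt pr) < eps.
Proof.
  intros HT eps Heps.
  pose proof (ex_RInt_Reals_aux_1 g0 0 T pr) as H.
  unfold is_RInt, filterlim, filter_le, filtermap in H.
  specialize (H (ball (RiemannInt pr) (mkposreal eps Heps)) (locally_ball _ _)).
  unfold Riemann_fine, within, locally_dist in H. destruct H as [d Hd].
  destruct (archimed_cor1 (d / T)) as [N0 [HN0 HN0p]].
  { destruct d; simpl. apply Rdiv_lt_0_compat; lra. }
  exists N0. intros N HN HN1.
  assert (HNr : 0 < INR N) by (apply lt_0_INR; lia).
  assert (HN0r : 0 < INR N0) by (apply lt_0_INR; lia).
  assert (HNN : INR N0 <= INR N) by (apply le_INR; lia).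
  assert (HI : INR (N - 1) + 1 = INR N).
  { replace N with (Datatypes.S (N - 1)) at 2 by lia. rewrite S_INR. ring. }
  destruct (Riemann_fine_unif_part (fun x _ => x) 0 T (N - 1)) as [Hs [Hp [Hh Hl]]].
  { intros; lra. } { lra. }
  specialize (Hd (SF_seq_f2 (fun x _ => x) (unif_part 0 T (N - 1)))).
  rewrite Rmin_left, Rmax_right in Hd by lra.
  assert (Hstep : seq_step (SF_lx (SF_seq_f2 (fun x _ : R => x) (unif_part 0 T (N - 1)))) < d).
  { eapply Rle_lt_trans. apply Hs. rewrite HI, Rminus_0_r.
    pose proof (cond_pos d) as dp.
    apply Rle_lt_trans with (T / INR N0).
    { unfold Rdiv. apply Rmult_le_compat_l. lra. apply Rinv_le_contravar; lra. }
    apply (Rmult_lt_reg_r (/ T)). apply Rinv_0_lt_compat; lra.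
    replace (T / INR N0 * / T) with (/ INR N0) by (field; lra).
    replace (d * / T) with (d / T) by reflexivity. lra. }
  specialize (Hd Hstep (conj Hp (conj Hh Hl))).
  change (Rabs (scal (sign (T - 0)) (Riemann_sum g0 (SF_seq_f2 (fun x _ : R => x) (unif_part 0 T (N - 1)))) - RiemannInt pr) < eps) in Hd.
  rewrite sign_eq_1 in Hd by lra.
  change (scal 1 ?x) with (1 * x) in Hd. rewrite Rmult_1_l in Hd.
  unfold unif_part in Hd. rewrite RS_mkseq in Hd. rewrite sum_f_R0_S in Hd.
  rewrite HI in Hd.
  replace (T / INR N * g0 0 + SS (fun k : nat => T / INR N * g0 (INR k * T / INR N)) (N - 1))
    with ((INR 1 - INR 0) * (T - 0) / INR N * g0 (0 + INR 0 * (T - 0) / INR N) +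
      SS (fun i : nat => (0 + INR (Datatypes.S i) * (T - 0) / INR N - (0 + INR i * (T - 0) / INR N)) *
        g0 (0 + INR i * (T - 0) / INR N)) (N - 1)).
  { replace ((INR 1 - INR 0) * (T - 0) / INR N * g0 (0 + INR 0 * (T - 0) / INR N))
      with ((0 + INR 1 * (T - 0) / INR N - (0 + INR 0 * (T - 0) / INR N)) * g0 (0 + INR 0 * (T - 0) / INR N))
      by (field; lra). exact Hd. }
  f_equal.
  { simpl. replace (0 + 0 * (T - 0) / INR N) with 0 by (field; lra). field; lra. }
  apply S_ext. intros k _. rewrite S_INR.
  replace (0 + INR k * (T - 0) / INR N) with (INR k * T / INR N) by (field; lra).
  f_equal. field; lra.
Qed.

Lemma Rpower_inv_h (T N g : R) : 0 < T -> 0 < N ->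
  Rpower (N / T) (2 * g - 1) = (T / N) / Rpower (T / N) (2 * g).
Proof.
  intros HT HN. unfold Rpower.
  replace (N / T) with (/ (T / N)) by (field; lra).
  rewrite ln_Rinv by (apply Rdiv_lt_0_compat; lra).
  replace ((2 * g - 1) * - ln (T / N)) with (ln (T / N) + - (2 * g * ln (T / N))) by ring.
  rewrite exp_plus, exp_ln by (apply Rdiv_lt_0_compat; lra).
  rewrite exp_Ropp. unfold Rdiv at 3. reflexivity.
Qed.

Lemma ev2_eq T K gamma N : (1 <= N)%nat -> 0 < T ->
  EV2 T K gamma N = SS (fun k => T / INR N *
    (D2 K (INR k * T / INR N + T / INR N) (INR k * T / INR N) (INR k * T / INR N - T / INR N)
      / Rpower (T / INR N) (2 * gamma))) (N - 1).
Proof.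
  intros HN HT. assert (HNr : 0 < INR N) by (apply lt_0_INR; lia).
  unfold EV2. change (fold_right Rplus 0 (map ?f (seq 1 (N - 1)))) with (SS f (N - 1)).
  rewrite Rpower_inv_h by lra. rewrite <- S_scal. apply S_ext.
  intros k Hk. unfold tpt. rewrite S_INR.
  replace (INR (Init.Nat.pred k)) with (INR k - 1).
  2: { replace k with (Datatypes.S (Init.Nat.pred k)) at 1 by lia. rewrite S_INR. ring. }
  replace ((INR k + 1) * T / INR N) with (INR k * T / INR N + T / INR N) by (field; lra).
  replace ((INR k - 1) * T / INR N) with (INR k * T / INR N - T / INR N) by (field; lra).
  unfold Rdiv. ring.
Qed.

Lemma ratio_bd C h ph g : 0 < h -> h <= ph -> 0 < g < 1 ->
  16 * (C * C * Rpower (ph + h) (2 * g)) / Rpower h (2 * g) * ph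
    <= 64 * (C * C) * (h * (ph / h) ^ 3).
Proof.
  intros Hh Hph Hg.
  set (L := ph / h).
  assert (HL : 1 <= L). { unfold L. apply (Rmult_le_reg_r h); auto. unfold Rdiv. rewrite Rmult_assoc, Rinv_l by lra. lra. }
  assert (Hph' : ph = L * h) by (unfold L; field; lra).
  assert (Hu : ph + h = (L + 1) * h) by (rewrite Hph'; ring).
  rewrite Hu, <- Rpower_mult_distr by lra.
  assert (HP : 0 < Rpower h (2 * g)) by (unfold Rpower; apply exp_pos).
  replace (16 * (C * C * (Rpower (L + 1) (2 * g) * Rpower h (2 * g))) / Rpower h (2 * g) * ph)
    with (16 * (C * C) * Rpower (L + 1) (2 * g) * (L * h)) by (rewrite Hph'; field; lra).
  assert (HR : Rpower (L + 1) (2 * g) <= (L + 1) ^ 2).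
  { rewrite <- Rpower_pow by lra. apply Rle_Rpower. lra. simpl. lra. }
  assert (HC : 0 <= C * C) by nra.
  assert (H4 : (L + 1) ^ 2 <= 4 * L ^ 2) by nra.
  assert (HLh : 0 <= L * h) by nra.
  apply Rle_trans with (16 * (C * C) * (4 * L ^ 2) * (L * h)).
  { apply Rmult_le_compat_r. auto. apply Rmult_le_compat_l. nra. lra. }
  right. ring.
Qed.

Lemma S_minus f g n : SS (fun k => f k - g k) n = SS f n - SS g n.
Proof. induction n. rewrite !S_0; lra. rewrite !S_S, IHn. lra. Qed.

Lemma est T K gamma N (g0 : R -> R) phih C delta0 eta B :
  (1 <= N)%nat -> 0 < T -> 0 < gamma < 1 -> cov_kernel T K ->
  (forall delta, 0 < delta < delta0 -> delta <= T ->
      sqrt (sigma2 K 0 delta) <= C * Rpower delta gamma) ->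
  0 < eta -> 0 <= B -> (forall t, 0 <= t <= T -> Rabs (g0 t) <= B) ->
  T / INR N <= phih -> phih + T / INR N < delta0 -> phih + T / INR N <= T ->
  (forall t, phih <= t <= T - T / INR N ->
     Rabs (D2 K (t + T / INR N) t (t - T / INR N) / Rpower (T / INR N) (2 * gamma) - g0 t) <= eta) ->
  Rabs (EV2 T K gamma N - (T / INR N * g0 0 + SS (fun k => T / INR N * g0 (INR k * T / INR N)) (N - 1)))
   <= T * eta + 64 * (C * C) * (T / INR N * (phih / (T / INR N)) ^ 3) + B * phih + T / INR N * B.
Proof.
  intros HN HT Hg HK HC Heta HB Hb Hph Hud HuT Hl.
  assert (HNr : 0 < INR N) by (apply lt_0_INR; lia).
  rewrite ev2_eq by auto.
  set (h := T / INR N) in *.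
  assert (Hh : 0 < h) by (unfold h; apply Rdiv_lt_0_compat; lra).
  assert (HNh : INR N * h = T) by (unfold h; field; lra).
  set (P := Rpower h (2 * gamma)) in *.
  assert (HP : 0 < P) by (unfold P, Rpower; apply exp_pos).
  set (M := C * C * Rpower (phih + h) (2 * gamma)).
  assert (HM : forall x, 0 <= x <= phih + h -> sigma2 K 0 x <= M).
  { intros x Hx. apply (sig0_bound T K gamma HK C delta0); try lra. auto. }
  set (Q := 16 * M / P + B).
  assert (HM0 : 0 <= M).
  { pose proof (HM 0 ltac:(lra)). unfold sigma2 in H. lra. }
  assert (HQ : 0 <= Q).
  { unfold Q. unfold Rdiv. pose proof (Rinv_0_lt_compat P HP). nra. }
  assert (Hterm : forall k, (1 <= k <= N - 1)%nat ->
    Rabs (h * (D2 K (INR k * T / INR N + h) (INR k * T / INR N) (INR k * T / INR N - h) / P)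
          - h * g0 (INR k * T / INR N))
    <= h * eta + (if Rlt_dec (INR k * h) phih then h else 0) * Q).
  { intros k Hk.
    replace (INR k * T / INR N) with (INR k * h) by (unfold h; field; lra).
    assert (Hk1 : 1 <= INR k) by (apply (le_INR 1); lia).
    assert (Hk2 : INR k + 1 <= INR N).
    { rewrite <- S_INR. apply le_INR. lia. }
    assert (Hkh : INR k * h + h <= T) by nra.
    rewrite <- Rmult_minus_distr_l, Rabs_mult, (Rabs_right h) by lra.
    destruct (Rlt_dec (INR k * h) phih) as [Lt|Ge].
    - assert (HD0 : 0 <= D2 K (INR k * h + h) (INR k * h) (INR k * h - h)).
      { apply (D2_nonneg T K HK); nra. }
      assert (HD : D2 K (INR k * h + h) (INR k * h) (INR k * h - h) <= 16 * M).
      { apply (D2_small T K HK _ _ _ (phih + h)); try nra; exact HM. }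
      assert (HDP : D2 K (INR k * h + h) (INR k * h) (INR k * h - h) / P <= 16 * M / P).
      { unfold Rdiv. apply Rmult_le_compat_r. left; apply Rinv_0_lt_compat; auto. auto. }
      assert (HDP0 : 0 <= D2 K (INR k * h + h) (INR k * h) (INR k * h - h) / P).
      { unfold Rdiv. apply Rmult_le_pos. auto. left; apply Rinv_0_lt_compat; auto. }
      assert (Hg0 : Rabs (g0 (INR k * h)) <= B) by (apply Hb; nra).
      assert (Habs : Rabs (D2 K (INR k * h + h) (INR k * h) (INR k * h - h) / P - g0 (INR k * h)) <= Q).
      { unfold Q. eapply Rle_trans. apply Rabs_triang. rewrite Rabs_Ropp, Rabs_right by lra. lra. }
      assert (h * Rabs (D2 K (INR k * h + h) (INR k * h) (INR k * h - h) / P - g0 (INR k * h)) <= h * Q)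
        by (apply Rmult_le_compat_l; lra).
      nra.
    - assert (Habs := Hl (INR k * h) ltac:(nra)).
      assert (h * Rabs (D2 K (INR k * h + h) (INR k * h) (INR k * h - h) / P - g0 (INR k * h)) <= h * eta)
        by (apply Rmult_le_compat_l; lra).
      lra. }
  replace (SS (fun k => h * (D2 K (INR k * T / INR N + h) (INR k * T / INR N) (INR k * T / INR N - h) / P)) (N - 1) -
    (h * g0 0 + SS (fun k => h * g0 (INR k * T / INR N)) (N - 1)))
    with (SS (fun k => h * (D2 K (INR k * T / INR N + h) (INR k * T / INR N) (INR k * T / INR N - h) / P)
          - h * g0 (INR k * T / INR N)) (N - 1) - h * g0 0)
    by (rewrite S_minus; ring).
  eapply Rle_trans. apply Rabs_triang. rewrite Rabs_Ropp, Rabs_mult, (Rabs_right h) by lra.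
  assert (Hg00 : Rabs (g0 0) <= B) by (apply Hb; lra).
  assert (H1 : Rabs (SS (fun k => h * (D2 K (INR k * T / INR N + h) (INR k * T / INR N) (INR k * T / INR N - h) / P)
          - h * g0 (INR k * T / INR N)) (N - 1))
     <= SS (fun k => h * eta + (if Rlt_dec (INR k * h) phih then h else 0) * Q) (N - 1)).
  { eapply Rle_trans. apply S_abs. apply S_le. exact Hterm. }
  rewrite S_plus, S_const in H1.
  replace (SS (fun k => (if Rlt_dec (INR k * h) phih then h else 0) * Q) (N - 1))
    with (Q * SS (fun k => if Rlt_dec (INR k * h) phih then h else 0) (N - 1)) in H1.
  2: { rewrite <- S_scal. apply S_ext. intros. ring. }
  pose proof (count_le h phih (N - 1) Hh ltac:(lra)) as Hcnt.
  pose proof (Rmin_r (INR (N - 1) * h) phih).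
  assert (HN1 : INR (N - 1) * h <= T).
  { rewrite <- HNh. apply Rmult_le_compat_r. lra. apply le_INR. lia. }
  assert (Hc1 : Q * SS (fun k => if Rlt_dec (INR k * h) phih then h else 0) (N - 1) <= Q * phih).
  { apply Rmult_le_compat_l; lra. }
  assert (Hc2 : INR (N - 1) * (h * eta) <= T * eta).
  { rewrite <- Rmult_assoc. apply Rmult_le_compat_r; lra. }
  pose proof (ratio_bd C h phih gamma Hh Hph Hg) as Hr.
  assert (HQ2 : Q * phih = 16 * M / P * phih + B * phih) by (unfold Q; ring).
  unfold M, P in HQ2. fold M P in HQ2.
  assert (h * Rabs (g0 0) <= h * B) by (apply Rmult_le_compat_l; lra).
  unfold M, P in *. lra.
Qed.

Lemma N_ge (N : nat -> nat) : (forall n, (N n < N (Datatypes.S n))%nat) -> forall n, (n <= N n)%nat.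
Proof. intros H n. induction n. lia. specialize (H n). lia. Qed.

Lemma mul_le_div a x e : 0 <= a -> 0 <= x -> x <= e / (a + 1) -> a * x <= e.
Proof.
  intros Ha Hx Hxe. apply Rle_trans with ((a + 1) * x). nra.
  apply Rle_trans with ((a + 1) * (e / (a + 1))). apply Rmult_le_compat_l; lra.
  right. field. lra.
Qed.

Theorem proposition2
  (T : R) (HT : 0 < T)
  (N : nat -> nat) (HN : forall n, (N n < N (S n))%nat)
  (K : R -> R -> R) (HK : cov_kernel T K)
  (gamma : R) (Hg : 0 < gamma < 1) (HC1 : cond_C1 T K gamma)
  (phi : R -> R) (Hphi : in_Psi T phi)
  (g0 : R -> R)
  (Hg0c : forall t, 0 < t < T -> limit1_in g0 (fun x => 0 < x < T) (g0 t) t)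
  (Hg0b : exists B, forall t, 0 < t < T -> Rabs (g0 t) <= B)
  (Hlim : forall eps, 0 < eps -> exists delta, 0 < delta /\
     forall h, 0 < h < delta -> forall t, phi h <= t <= T - h ->
       Rabs (D2 K (t + h) t (t - h) / Rpower h (2 * gamma) - g0 t) <= eps) :
  exists pr : Riemann_integrable g0 0 T,
    Un_cv (fun n => EV2 T K gamma (N n)) (RiemannInt pr).
Proof.
  destruct HC1 as [C [delta0 [HCp [Hd0 HCb]]]].
  destruct Hphi as [_ [Hnn [Hlim0 [HL Hcube]]]].
  destruct Hg0b as [B0 HB0].
  set (B := Rmax (Rmax B0 (Rabs (g0 0))) (Rabs (g0 T))).
  assert (HB : 0 <= B).
  { unfold B. eapply Rle_trans. 2: apply Rmax_l. eapply Rle_trans. 2: apply Rmax_r. apply Rabs_pos. }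
  assert (Hb : forall t, 0 <= t <= T -> Rabs (g0 t) <= B).
  { intros t Ht. unfold B.
    destruct (Req_dec t 0) as [->|H0].
    { eapply Rle_trans. 2: apply Rmax_l. apply Rmax_r. }
    destruct (Req_dec t T) as [->|H1].
    { apply Rmax_r. }
    eapply Rle_trans. 2: apply Rmax_l. eapply Rle_trans. 2: apply Rmax_l. apply HB0. lra. }
  assert (pr : Riemann_integrable g0 0 T).
  { apply (g0_int T g0 B HT HB Hb). intros t Ht. apply (cont_interior g0 T t Ht). auto. }
  exists pr. intros eps Heps.
  set (e5 := eps / 5).
  assert (He5 : 0 < e5) by (unfold e5; lra).
  destruct (Hlim (e5 / T) ltac:(apply Rdiv_lt_0_compat; lra)) as [dH [HdH HlimH]].
  destruct (HL 1) as [dL [HdL HLL]].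
  set (e2 := Rmin (e5 / (B + 1)) (Rmin (delta0 / 2) (T / 2))).
  assert (He2 : 0 < e2).
  { unfold e2. apply Rmin_pos. apply Rdiv_lt_0_compat; lra. apply Rmin_pos; lra. }
  assert (He2a : e2 <= e5 / (B + 1)) by apply Rmin_l.
  assert (He2b : e2 <= delta0 / 2) by (eapply Rle_trans; [apply Rmin_r|apply Rmin_l]).
  assert (He2c : e2 <= T / 2) by (eapply Rle_trans; [apply Rmin_r|apply Rmin_r]).
  destruct (Hlim0 e2 He2) as [a2 [Ha2 H2]].
  set (e3 := e5 / (64 * (C * C) + 1)).
  assert (He3 : 0 < e3) by (unfold e3; apply Rdiv_lt_0_compat; nra).
  destruct (Hcube e3 He3) as [a3 [Ha3 H3]].
  set (rho := Rmin (Rmin dH dL) (Rmin (Rmin a2 a3) e2)).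
  assert (Hrho : 0 < rho).
  { unfold rho. apply Rmin_pos; apply Rmin_pos; try lra. apply Rmin_pos; lra. }
  assert (Hr1 : rho <= dH) by (eapply Rle_trans; [apply Rmin_l|apply Rmin_l]).
  assert (Hr2 : rho <= dL) by (eapply Rle_trans; [apply Rmin_l|apply Rmin_r]).
  assert (Hr3 : rho <= a2) by (eapply Rle_trans; [apply Rmin_r|]; eapply Rle_trans; [apply Rmin_l|apply Rmin_l]).
  assert (Hr4 : rho <= a3) by (eapply Rle_trans; [apply Rmin_r|]; eapply Rle_trans; [apply Rmin_l|apply Rmin_r]).
  assert (Hr5 : rho <= e2) by (eapply Rle_trans; [apply Rmin_r|apply Rmin_r]).
  destruct (riemann_conv g0 T pr HT e5 He5) as [N0 HR].
  destruct (archimed_cor1 (rho / T)) as [N1 [HN1 HN1p]].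
  { apply Rdiv_lt_0_compat; lra. }
  exists (Nat.max N0 N1). intros n Hn.
  pose proof (N_ge N HN n) as Hnn'.
  set (M := N n) in *.
  assert (HM1 : (1 <= M)%nat) by lia.
  assert (HMr : 0 < INR M) by (apply lt_0_INR; lia).
  assert (HN1r : 0 < INR N1) by (apply lt_0_INR; lia).
  assert (HMN1 : INR N1 <= INR M) by (apply le_INR; lia).
  set (h := T / INR M).
  assert (Hh : 0 < h) by (unfold h; apply Rdiv_lt_0_compat; lra).
  assert (HhT : h <= T).
  { unfold h. apply (Rmult_le_reg_r (INR M)). lra. unfold Rdiv. rewrite Rmult_assoc, Rinv_l by lra.
    assert (1 <= INR M) by (apply (le_INR 1); lia). nra. }
  assert (Hhr : h < rho).
  { apply Rle_lt_trans with (T / INR N1).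
    { unfold h, Rdiv. apply Rmult_le_compat_l. lra. apply Rinv_le_contravar; lra. }
    apply (Rmult_lt_reg_r (/ T)). apply Rinv_0_lt_compat; lra.
    replace (T / INR N1 * / T) with (/ INR N1) by (field; lra). exact HN1. }
  assert (Hph : h <= phi h).
  { specialize (HLL h ltac:(lra) HhT). apply Rgt_lt in HLL.
    apply (Rmult_lt_compat_r h) in HLL; auto. unfold Rdiv in HLL.
    rewrite Rmult_assoc, Rinv_l, Rmult_1_r in HLL by lra. lra. }
  assert (Hdh : forall a, h < a -> dist R_met h 0 < a).
  { intros a Ha. simpl. unfold Rdist. rewrite Rminus_0_r, Rabs_right; lra. }
  assert (Hphe2 : phi h < e2).
  { specialize (H2 h (conj (conj Hh HhT) (Hdh a2 ltac:(lra)))).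
    simpl in H2. unfold Rdist in H2. rewrite Rminus_0_r in H2. apply Rabs_def2 in H2. lra. }
  assert (Hcub : Rabs (h * (phi h / h) ^ 3) < e3).
  { specialize (H3 h (conj (conj Hh HhT) (Hdh a3 ltac:(lra)))).
    simpl in H3. unfold Rdist in H3. rewrite Rminus_0_r in H3. exact H3. }
  pose proof (est T K gamma M g0 (phi h) C delta0 (e5 / T) B HM1 HT Hg HK HCb
    ltac:(apply Rdiv_lt_0_compat; lra) HB Hb Hph ltac:(fold h; lra) ltac:(fold h; lra)
    ltac:(intros t Ht; apply HlimH; [fold h; lra|exact Ht])) as Hest.
  fold h in Hest.
  specialize (HR M ltac:(lia) HM1). fold h in HR.
  unfold R_dist.
  replace (EV2 T K gamma M - RiemannInt pr) with
    ((EV2 T K gamma M - (h * g0 0 + SS (fun k => h * g0 (INR k * T / INR M)) (M - 1))) +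
     (h * g0 0 + SS (fun k => h * g0 (INR k * T / INR M)) (M - 1) - RiemannInt pr)) by ring.
  eapply Rle_lt_trans. apply Rabs_triang.
  assert (E1 : T * (e5 / T) = e5) by (field; lra).
  assert (E2 : 64 * (C * C) * (h * (phi h / h) ^ 3) <= e5).
  { apply Rle_trans with (64 * (C * C) * Rabs (h * (phi h / h) ^ 3)).
    { apply Rmult_le_compat_l. nra. apply Rle_abs. }
    apply mul_le_div. nra. apply Rabs_pos. unfold e3 in Hcub. lra. }
  assert (E3 : B * phi h <= e5) by (apply mul_le_div; lra).
  assert (E4 : h * B <= e5) by (rewrite Rmult_comm; apply mul_le_div; lra).
  unfold e5 in *. lra.
Qed.
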